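(* For every $n\ge 1$ and every Dyck path $D\in\mathcal{D}_n$, the poset $\psi(D)$ is isomorphic to $\Xi_{\mathrm{poset}}(\Lambda_{\mathrm{steep}}(D))$; that is, $\psi=\Xi_{\mathrm{poset}}\circ\Lambda_{\mathrm{steep}}$ as maps to unit interval posets up to isomorphism.
   Context: A Dyck path of size $n$ is a lattice path from $(0,0)$ to $(n,n)$ with steps $\uparrow=(0,1)$ and $\rightarrow=(1,0)$ staying weakly above $y=x$; $\mathcal{D}_n$ is their set. Its area vector $(a_1,\dots,a_n)$ has $a_i$ equal to the number of full unit squares lying between the path and the diagonal $y=x$ in the row $i-1\le y\le i$. A plane tree is either a single node, or a root joined to an ordered (left-to-right) sequence of plane trees whose roots are its children; $\mathcal{T}_n$ is the set of plane trees with $n$ non-root nodes; the depth $d(u)$ of a node is its distance to the root. For a finite $S=\{x_1<\dots<x_n\}\subset\mathbb{R}$, $\preceq_S$ is the partial order on $[n]$ with $i\prec_S j$ iff $x_i+1<x_j$. $\Xi_{\mathrm{steep}}$: for $T\in\mathcal{T}_n$, perform the clockwise contour walk around $T$ starting at the root (so subtrees are visited from right to left); append $\uparrow$ each time an edge is traversed for the first time and $\rightarrow$ each time it is traversed for the second time. This is a bijection $\mathcal{T}_n\to\mathcal{D}_n$; $\Lambda_{\mathrm{steep}}$ is its inverse. $\Xi_{\mathrm{poset}}$: for $T\in\mathcal{T}_n$ with maximal number of children $m$, for a non-root node $u$ let $c(u)=i$ if $u$ is the $i$-th child of its parent counted from right to left; with $u_0=\text{root},\dots,u_{d(u)}=u$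 the root-to-$u$ path set $x_u=d(u)+\sum_{i=1}^{d(u)}c(u_i)(m+2)^{-i}$; with $S=\{x_u: u\text{ non-root}\}$, $\Xi_{\mathrm{poset}}(T)=([n],\preceq_S)$. $\psi$: for $D\in\mathcal{D}_n$ with area vector $(a_1,\dots,a_n)$, $\psi(D)$ is the poset on $[n]$ with $i\prec j$ iff either $a_i+2\le a_j$, or ($a_i+1=a_j$ and $i<j$). *)

(* Defs.v *)
From HB Require Import structures.
From mathcomp Require Import all_boot all_order all_algebra.
Unset Printing Implicit Defensive.
Import Order.TTheory GRing.Theory Num.Theory.

(* ---------- Dyck paths: words over bool, true = up step, false = right step *)

Definition is_dyck (n : nat) (D : seq bool) : bool :=
  [&& size D == 2 * n, count id D == n &
      all (fun i => count negb (take i D) <= count id (take i D))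
          (iota 0 (size D).+1)].

Fixpoint up_xs (x : nat) (D : seq bool) : seq nat :=
  match D with
  | [::] => [::]
  | true :: D' => x :: up_xs x D'
  | false :: D' => up_xs x.+1 D'
  end.

(* area vector, 0-indexed: entry j is a_{j+1} = j - x_{j+1}, the number of
   full unit squares between the path and the diagonal in row j <= y <= j+1. *)
Definition area_vec (n : nat) (D : seq bool) : seq nat :=
  mkseq (fun j => j - nth 0 (up_xs 0 D) j) n.

Definition area (n : nat) (D : seq bool) (i : 'I_n) : nat :=
  nth 0 (area_vec n D) i.

Definition psi_lt (n : nat) (D : seq bool) (i j : 'I_n) : bool :=
  (area n D i + 2 <= area n D j) || ((area n D i + 1 == area n D j) && (i < j)).

Definition psi_le (n : nat) (D : seq bool) : rel 'I_n :=
  fun i j => (i == j) || psi_lt n D i j.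

(* ---------- Plane trees: a node with an ordered (left-to-right) list of
   children. *)
Inductive ptree : Type := PNode of seq ptree.

(* number of non-root nodes *)
Fixpoint tsize (t : ptree) : nat :=
  match t with
  | PNode cs =>
      (fix go (cs : seq ptree) : nat :=
         match cs with [::] => 0 | c :: cs' => (tsize c).+1 + go cs' end) cs
  end.

Fixpoint maxdeg (t : ptree) : nat :=
  match t with
  | PNode cs =>
      maxn (size cs)
        ((fix go (cs : seq ptree) : nat :=
            match cs with [::] => 0 | c :: cs' => maxn (maxdeg c) (go cs') end) cs)
  end.

(* Xi_steep: clockwise contour walk from the root, subtrees visited from right
   to left; up (true) on first traversal of an edge, right (false) on second. *)
Fixpoint Xi_steep (t : ptree) : seq bool :=
  match t with
  | PNode cs =>
      (fix go (cs : seq ptree) : seq bool :=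
         match cs with
         | [::] => [::]
         | c :: cs' => go cs' ++ (true :: Xi_steep c ++ [:: false])
         end) cs
  end.

(* The values x_u of all non-root nodes of the subtree t, where t sits at depth
   d, [frac] is sum_{i=1}^{d} c(u_i) (m+2)^{-i} for t's root, and [base] = m+2.
   The head child c of c :: cs' is the (size cs').+1-th child from the right. *)
Fixpoint xvals (base : nat) (d : nat) (frac : rat) (t : ptree) : seq rat :=
  match t with
  | PNode cs =>
      (fix go (cs : seq ptree) : seq rat :=
         match cs with
         | [::] => [::]
         | c :: cs' =>
             let f := (frac + (size cs').+1%:R / (base%:R ^+ d.+1))%R in
             ((d.+1)%:R + f)%R :: xvals base d.+1 f c ++ go cs'
         end) cs
  end.

Definition Sxs (t : ptree) : seq rat :=
  sort (fun x y : rat => (x <= y)%R) (undup (xvals (maxdeg t + 2) 0 0 t)).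

Definition Xi_poset_lt (t : ptree) (i j : 'I_(size (Sxs t))) : bool :=
  (nth 0 (Sxs t) i + 1 < nth 0 (Sxs t) j)%R.

Definition Xi_poset_le (t : ptree) : rel 'I_(size (Sxs t)) :=
  fun i j => (i == j) || Xi_poset_lt t i j.

Definition poset_iso {A B : finType} (R : rel A) (R' : rel B) : Prop :=
  exists f : A -> B, bijective f /\ forall x y, R x y = R' (f x) (f y).

(* Main.v *)
Require Import Defs.
From mathcomp Require Import all_boot all_order all_algebra.
From mathcomp Require Import zify ring lra.
Import Defs.
Import Order.TTheory GRing.Theory Num.Theory.

Definition ptree_ind2 (P : ptree -> Prop) (H0 : P (PNode [::]))
  (Hc : forall c cs, P c -> P (PNode cs) -> P (PNode (c::cs))) : forall t, P t :=
 fix F t := match t with PNode cs =>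
   (fix G cs : P (PNode cs) := match cs with [::] => H0
      | c :: cs' => Hc c cs' (F c) (G cs') end) cs end.

Fixpoint sl (B d : nat) (phi : rat) (t : ptree) : seq (nat * rat) :=
  match t with PNode cs =>
   (fix go cs := match cs with [::] => [::] | c :: cs' =>
      let f := (phi + (size cs').+1%:R / (B%:R ^+ d.+1))%R in
      go cs' ++ ((d.+1, f) :: sl B d.+1 f c) end) cs end.

Definition ch (t : ptree) := let: PNode cs := t in cs.

Lemma sl_cons B d phi c cs : sl B d phi (PNode (c :: cs)) =
  sl B d phi (PNode cs) ++ (d.+1, (phi + (size cs).+1%:R / (B%:R ^+ d.+1))%R)
     :: sl B d.+1 (phi + (size cs).+1%:R / (B%:R ^+ d.+1))%R c.
Proof. by []. Qed.

Lemma Xi_cons c cs : Xi_steep (PNode (c :: cs)) =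
  Xi_steep (PNode cs) ++ true :: Xi_steep c ++ [:: false].
Proof. by []. Qed.

Lemma tsize_cons c cs : tsize (PNode (c :: cs)) = (tsize c).+1 + tsize (PNode cs).
Proof. by []. Qed.

Lemma xvals_cons B d phi c cs : xvals B d phi (PNode (c :: cs)) =
  ((d.+1)%:R + (phi + (size cs).+1%:R / (B%:R ^+ d.+1)))%R
   :: xvals B d.+1 (phi + (size cs).+1%:R / (B%:R ^+ d.+1))%R c
   ++ xvals B d phi (PNode cs).
Proof. by []. Qed.

Lemma maxdeg_cons c cs :
  maxdeg c <= maxdeg (PNode (c :: cs)) /\ maxdeg (PNode cs) <= maxdeg (PNode (c :: cs)).
Proof.
rewrite /=; split; first by rewrite leq_max leq_max leqnn orbT.
by rewrite geq_max leq_max ltnW //= leq_max orbC leq_max leqnn orbT.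
Qed.

Lemma size_ch t : size (ch t) <= maxdeg t.
Proof. by case: t => cs /=; rewrite leq_max leqnn. Qed.

Lemma up_xs_cat x a b : up_xs x (a ++ b) = up_xs x a ++ up_xs (x + count negb a) b.
Proof.
elim: a x => [|[] a IH] x /=; first by rewrite addn0.
  by rewrite IH.
by rewrite IH addSnnS.
Qed.

Lemma size_up_xs x w : size (up_xs x w) = count id w.
Proof. by elim: w x => [|[] w IH] x //=; rewrite IH. Qed.

Lemma count_Xi t : count id (Xi_steep t) = tsize t /\ count negb (Xi_steep t) = tsize t.
Proof.
elim/ptree_ind2: t => [//|c cs [H1 H2] [H3 H4]].
rewrite Xi_cons tsize_cons; move: H3 H4; move: (tsize (PNode cs)) => k H3 H4.
rewrite !count_cat /= !count_cat /= H1 H2 H3 H4; lia.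
Qed.

Lemma size_sl B d phi t : size (sl B d phi t) = tsize t.
Proof.
elim/ptree_ind2: t d phi => [//|c cs IH1 IH2] d phi.
by rewrite sl_cons tsize_cons size_cat /= IH1 IH2 addnC.
Qed.

Lemma up_xs_true x w : up_xs x (true :: w) = x :: up_xs x w.
Proof. by []. Qed.
Lemma up_xs_false1 x : up_xs x [:: false] = [::].
Proof. by []. Qed.

Lemma up_sl B t : forall x d phi j, j < tsize t ->
  nth 0 (up_xs x (Xi_steep t)) j + (nth (0%N, 0%R) (sl B d phi t) j).1 = x + j + d + 1.
Proof.
elim/ptree_ind2: t => [|c cs IHc IHs] x d phi j //.
rewrite tsize_cons => hj.
rewrite Xi_cons sl_cons up_xs_cat up_xs_true up_xs_cat up_xs_false1 cats0.
rewrite !nth_cat size_up_xs size_sl (proj1 (count_Xi _)) (proj2 (count_Xi _)).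
case: ltnP => h; first by rewrite IHs.
move: (tsize (PNode cs)) h hj => s h hj.
case E: (j - s) => [|k] /=; first lia.
rewrite IHc; lia.
Qed.

Lemma depth_sl B t : forall d phi, all (fun p => d < p.1) (sl B d phi t).
Proof.
elim/ptree_ind2: t => [//|c cs IHc IHs] d phi.
rewrite sl_cons all_cat IHs /= ltnSn /=.
by apply: sub_all (IHc d.+1 _) => p /= /ltnW.
Qed.

Lemma perm_xvals B t : forall d phi, perm_eq (xvals B d phi t)
  (map (fun p : nat * rat => (p.1%:R + p.2)%R) (sl B d phi t)).
Proof.
elim/ptree_ind2: t => [//|c cs IHc IHs] d phi.
rewrite xvals_cons sl_cons map_cat map_cons perm_sym.
rewrite perm_catC.
rewrite cat_cons perm_cons perm_sym; apply: perm_cat; first exact: IHc.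
exact: IHs.
Qed.

Local Open Scope ring_scope.

Lemma step_bound (k m d : nat) : (k <= m)%N ->
  k.+1%:R / ((m+2)%:R ^+ d.+2) <= 1 / (m+2)%:R ^+ d.+1 :> rat.
Proof.
move=> hk.
have hq : 0 < m.+2%:R ^+ d.+1 :> rat by apply: exprn_gt0; rewrite ltr0n.
rewrite addn2 exprS ler_pdivrMr ?mulr_gt0 ?ltr0n //.
rewrite mul1r mulrCA mulVf ?mulr1 ?gt_eqF // ler_nat; lia.
Qed.

Lemma frac_sl m t : (maxdeg t <= m)%N -> forall d phi,
 (forall e, e \in map snd (sl (m+2) d phi t) ->
    phi < e < phi + (size (ch t)).+1%:R / ((m+2)%:R ^+ d.+1))
 /\ pairwise <%R (map snd (sl (m+2) d phi t)).
Proof.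
elim/ptree_ind2: t => [_ d phi|c cs IHc IHs hmd d phi]; first by [].
have [hc hs] := maxdeg_cons c cs.
have hcm : (maxdeg c <= m)%N by exact: leq_trans hc hmd.
have hsm : (maxdeg (PNode cs) <= m)%N by exact: leq_trans hs hmd.
have hchc : (size (ch c) <= m)%N := leq_trans (size_ch c) hcm.
move: (IHs hsm d phi) => [Bs Ps].
set q := (m+2)%:R ^+ d.+1 in Bs *.
have qpos : 0 < q by apply: exprn_gt0; rewrite ltr0n addn2.
set a := (size cs).+1%:R / q.
have apos : 0 < a by rewrite divr_gt0 // ltr0n.
move: (IHc hcm d.+1 (phi + a)) => [Bc Pc].
have hsb := step_bound (size (ch c)) m d hchc.
set w := _ / (_ ^+ d.+2) in hsb Bc.
rewrite -/q in hsb.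
have qi : 0 < 1 / q by rewrite divr_gt0.
have e2 : (size cs).+2%:R / q = a + 1 / q by rewrite -natr1 mulrDl.
rewrite sl_cons map_cat map_cons -/q -/a /=.
change (size (ch (PNode (c::cs)))) with (size cs).+1.
rewrite e2.
have Bs' : forall e, e \in [seq i.2 | i <- sl (m + 2) d phi (PNode cs)] -> phi < e < phi + a
  by move=> e /Bs.
split.
  move=> e; rewrite mem_cat in_cons => /orP[/Bs' /andP[h1 h2]|/orP[/eqP->|/Bc /andP[h1 h2]]];
    apply/andP; split; lra.
rewrite pairwise_cat pairwise_cons Ps Pc andbT /=.
apply/andP; split.
  apply/allrelP => x y /Bs' /andP[h1 h2]; rewrite in_cons => /orP[/eqP->|/Bc /andP[h3 h4]]; lra.
by apply/allP => y /Bc /andP[h3 h4].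
Qed.

Lemma neq_val (a b : nat) (x y : rat) : 0 < x < 1 -> 0 < y < 1 -> x < y ->
  a%:R + x != b%:R + y.
Proof.
move=> /andP[x0 x1] /andP[y0 y1] xy.
case: (leqP a b) => h.
  have : a%:R <= b%:R :> rat by rewrite ler_nat.
  move=> h'; apply/eqP => E; lra.
have : (b + 1)%:R <= a%:R :> rat by rewrite ler_nat addn1.
rewrite natrD => h'; apply/eqP => E; lra.
Qed.

Lemma cmp_val (a b : nat) (x y : rat) : 0 < x < 1 -> 0 < y < 1 ->
  (a%:R + x + 1 < b%:R + y) = ((a + 2 <= b)%N || ((a.+1 == b) && (x < y))).
Proof.
move=> /andP[x0 x1] /andP[y0 y1].
have [h|[h|h]] : (a + 2 <= b)%N \/ b = a.+1 \/ (b <= a)%N by lia.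
- rewrite h /=.
  have : (a + 2)%:R <= b%:R :> rat by rewrite ler_nat.
  rewrite natrD => h'; apply/idP; lra.
- rewrite h eqxx /= (_ : (a + 2 <= a.+1)%N = false); last by lia.
  rewrite -addn1 natrD /=; apply/idP/idP => H; lra.
- have : b%:R <= a%:R :> rat by rewrite ler_nat.
  move=> h'; rewrite (_ : (a + 2 <= b)%N = false); last by lia.
  rewrite (_ : (a.+1 == b) = false); last by apply/eqP; lia.
  apply/idP => H /=; lra.
Qed.

Local Close Scope ring_scope.

Theorem mainTheorem4 (n : nat) (D : seq bool) (T : ptree) :
  (1 <= n)%N -> is_dyck n D -> Xi_steep T = D ->
  poset_iso (psi_le n D) (Xi_poset_le T).
Proof.
move=> n1 hD hT.
have hn : tsize T = n.
  case/and3P: hD => _ /eqP hc _; by rewrite -hT (proj1 (count_Xi T)) in hc.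
set m := maxdeg T.
set L := sl (m+2) 0 0 T.
have sL : size L = n by rewrite size_sl.
set X := map (fun p : nat * rat => (p.1%:R + p.2)%R) L.
have sX : size X = n by rewrite size_map.
have [FB FP] := frac_sl m T (leqnn _) 0 0.
have fr01 : forall i, i < n -> (0 < (nth (0, 0%R) L i).2 < 1)%R.
  move=> i hi.
  have := FB (nth (0, 0%R) L i).2; rewrite -/L.
  rewrite (map_f snd (mem_nth _ _)) ?sL // => /(_ isT) /andP[h1 h2].
  rewrite h1 /=; apply: lt_le_trans h2 _.
  rewrite add0r expr1 ler_pdivrMr ?ltr0n ?addn2 // mul1r ler_nat.
  have := size_ch T; rewrite -/m; lia.
have frinc : forall i j, i < n -> j < n -> i < j ->
    ((nth (0, 0%R) L i).2 < (nth (0, 0%R) L j).2)%R.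
  move=> i j hi hj hij.
  have := (pairwiseP 0%R FP) i j; rewrite !inE size_map sL !(nth_map (0, 0%R)) ?sL //.
  by apply.
have dep : forall i, i < n -> 0 < (nth (0, 0%R) L i).1.
  move=> i hi; have := all_nthP (0, 0%R) (depth_sl (m+2) T 0 0); rewrite -/L.
  by move=> /(_ i); rewrite sL; apply.
have up : forall i, i < n -> nth 0 (up_xs 0 D) i + (nth (0, 0%R) L i).1 = i + 1.
  move=> i hi; rewrite -hT up_sl ?hn //; lia.
have area_eq : forall i : 'I_n, area n D i = (nth (0, 0%R) L i).1 - 1.
  move=> i; rewrite /area /area_vec nth_mkseq //.
  have := up i (ltn_ord i); lia.
have uX : uniq X.
  apply/(uniqP 0%R) => i j; rewrite !inE sX => hi hj.
  rewrite !(nth_map (0, 0%R)) ?sL // => E.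
  case: (ltngtP i j) => // hij; exfalso.
    by move: E; apply/eqP; apply: neq_val; auto.
  by move: E; apply/eqP; rewrite eq_sym; apply: neq_val; auto.
set S := Sxs T.
have pS : perm_eq S X.
  rewrite /S /Sxs perm_sort undup_id.
    exact: perm_xvals.
  by rewrite (perm_uniq (perm_xvals _ _ _ _)).
have sS : size S = n by rewrite (perm_size pS).
have mS : forall i : 'I_n, nth 0%R X i \in S.
  by move=> i; rewrite (perm_mem pS) mem_nth // sX.
have fP : forall i : 'I_n, index (nth 0%R X i) S < size S.
  by move=> i; rewrite index_mem.
pose f := fun i : 'I_n => Ordinal (fP i) : 'I_(size (Sxs T)).
have finj : injective f.
  move=> i j /(congr1 val) /= E.
  have : nth 0%R S (index (nth 0%R X i) S) = nth 0%R S (index (nth 0%R X j) S) by rewrite E.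
  rewrite !nth_index // => E2.
  apply: val_inj; apply: (uniqP 0%R uX) => //; rewrite sX; exact: ltn_ord.
have key : forall i j : 'I_n, psi_lt n D i j = (nth 0%R X i + 1 < nth 0%R X j)%R.
  move=> i j; rewrite /psi_lt !area_eq !(nth_map (0, 0%R)) ?sL //.
  rewrite cmp_val ?fr01 //.
  have di := dep i (ltn_ord i); have dj := dep j (ltn_ord j).
  case: (ltngtP i j) => hij.
  - move: (nth (0, 0%R) L i) (nth (0, 0%R) L j) di dj (frinc i j (ltn_ord i) (ltn_ord j) hij)
      => [a x] [b y] /= da db h1.
    rewrite h1 !andbT; apply/orP/orP; (case=> [H|/eqP H]; [left; lia| right; apply/eqP; lia]).
  - move: (nth (0, 0%R) L i) (nth (0, 0%R) L j) di dj (frinc j i (ltn_ord j) (ltn_ord i) hij)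
      => [a x] [b y] /= da db h2.
    rewrite (_ : (x < y)%R = false); last by apply/negbTE; rewrite -leNgt ltW.
    rewrite !andbF; apply/idP/idP; lia.
  - have E : i = j by apply: val_inj.
    subst j; move: (nth (0, 0%R) L i) di => [a x] /= da.
    rewrite ltxx !andbF; apply/idP/idP; lia.
exists f; split.
  by apply: inj_card_bij finj _; rewrite !card_ord sS.
move=> x y; rewrite /psi_le /Xi_poset_le /Xi_poset_lt (inj_eq finj) /= -/S.
by rewrite !nth_index // key.
Qed.
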